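(* Let $P_0(X)= 32 X^6-48 X^4+18 X^2-1$ and, for $p=(p_0,\dots,p_4)\in\mathbb R^5$, $P_p(X)=P_0(X)+\sum_{j=0}^4 p_j X^j$. The critical points of $P_0$ are $(\zeta_{i,0})_{1\le i\le 5}=(-\sqrt3/2,-1/2,0,1/2,\sqrt3/2)$, all non-degenerate, with critical values $(a_{i,0})_{1\le i\le 5}=(-1,1,-1,1,-1)$, and $\beta_0=1$ is a repelling fixed point of $P_0$. For $p$ near $0$ let $\zeta_{i,p}$, $a_{i,p}=P_p(\zeta_{i,p})$ and $\beta_p$ be the continuations of the critical points, critical values and of the fixed point $\beta_0$ for $P_p$. Then \[ \det\big[\partial_{p_j} (P_p(a_{i, p}))-\partial_{p_j} \beta_p \big]_{1\le i\le 5,\,0\le j\le 4} \neq 0 \quad \text{at } p=0 .\] *)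

(* Defs.v *)
From HB Require Import structures.
From mathcomp Require Import all_boot all_order all_algebra.
From mathcomp Require Import all_classical all_reals all_analysis.
Set Implicit Arguments. Unset Strict Implicit. Unset Printing Implicit Defensive.
Import Order.TTheory GRing.Theory Num.Theory.
Import numFieldNormedType.Exports.
Local Open Scope ring_scope.

Definition P0 (R : realType) : {poly R} :=
  32%:R *: 'X^6 - 48%:R *: 'X^4 + 18%:R *: 'X^2 - 1.

Definition Pp (R : realType) (p : 'rV[R]_5) : {poly R} :=
  P0 R + \sum_(j < 5) (p 0 j) *: 'X^j.

(* critical points of P_0, zeta_{i,0} for i = 1..5 (indexed by 'I_5 = 0..4) *)
Definition zeta0 (R : realType) (i : 'I_5) : R :=
  nth 0 [:: - (Num.sqrt 3%:R / 2%:R); - (1 / 2%:R); 0; 1 / 2%:R;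
            Num.sqrt 3%:R / 2%:R] i.

(* Main.v *)
Require Import Defs.
From HB Require Import structures.
From mathcomp Require Import all_boot all_order all_algebra.
From mathcomp Require Import all_classical all_reals all_analysis.
From mathcomp Require Import ring lra.
Import Order.TTheory GRing.Theory Num.Theory.
Import numFieldNormedType.Exports.

Local Open Scope ring_scope.

Lemma det_exp0 (R : comRingType) n (A : 'M[R]_n.+1) :
  \det A = \sum_(j < n.+1) A 0 j * ((-1)^+j * \det (row' 0 (col' j A))).
Proof. by rewrite (expand_det_row _ 0); apply: eq_bigr => j _; rewrite /cofactor add0n. Qed.

Fixpoint detf {R : comRingType} n (f : nat -> nat -> R) : R :=
  match n with
  | 0 => 1
  | n'.+1 => foldr (fun j acc => f 0 j * ((-1)^+j * detf n' (fun i k => f i.+1 (bump j k))) + acc) 0 (iota 0 n)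
  end.

Lemma detfE {R : comRingType} n (f : nat -> nat -> R) :
  \det (\matrix_(i < n, j < n) f i j) = detf n f.
Proof.
elim: n f => [|n IH] f; first by rewrite det_mx00.
rewrite det_exp0 /=.
have mE : forall j : 'I_n.+1, \det (row' 0 (col' j (\matrix_(i < n.+1, j < n.+1) f i j))) =
   detf n (fun i k => f i.+1 (bump j k)).
  move=> j; rewrite -IH; congr (\det _); apply/matrixP => i k; rewrite !mxE.
  by rewrite /= /bump.
under eq_bigr => j _ do rewrite mE mxE.
rewrite -(big_mkord xpredT (fun j => f 0 j * ((-1) ^+ j * detf n (fun i k => f i.+1 (bump j k))))).
rewrite unlock /index_iota subn0 /=. by elim: (iota 0 n.+1) => //= a l ->.
Qed.

Definition aL (R : realType) : seq R := [:: -1; 1; -1; 1; -1].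
Definition zL (R : realType) (s : R) : seq R := [:: - (s / 2%:R); - (1 / 2%:R); 0; 1 / 2%:R; s / 2%:R].


Lemma near_scale (R : realType) (Q : 'rV[R]_5 -> Prop) (v : 'rV[R]_5) :
  (\forall p \near (0:'rV[R]_5), Q p) -> \forall t \near (0:R), Q (t *: v).
Proof.
move=> H.
have X : ((fun k : R => k *: v) @ (0:R) --> (0 : 'rV[R]_5))%classic.
  by have := @scalel_continuous R _ v 0; rewrite /continuous_at scale0r.
exact: X _ H.
Qed.

Lemma dq_eq (R : realType) (f : 'rV[R]_5 -> R) (v : 'rV[R]_5) :
  (fun h : R => h^-1 *: ((f \o shift 0) (h *: v) - f 0)) =
  (fun h : R => h^-1 *: (((fun t : R => f (t *: v)) \o shift 0) (h *: 1) - (fun t : R => f (t *: v)) 0)).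
Proof.
apply: funext => h /=; rewrite !addr0 scale0r.
by rewrite [h%:A]mulr1.
Qed.

Lemma dirD (R : realType) (f : 'rV[R]_5 -> R) (v : 'rV[R]_5) :
  'D_v f 0 = 'D_1 (fun t : R => f (t *: v)) 0.
Proof. by rewrite /derive dq_eq. Qed.

Lemma dirDable (R : realType) (f : 'rV[R]_5 -> R) (v : 'rV[R]_5) :
  derivable f 0 v -> derivable (fun t : R => f (t *: v)) 0 1.
Proof. by rewrite /derivable dq_eq. Qed.

Lemma isd_comp (R : realType) (f g : R -> R) (x df dg : R) :
  is_derive x (1:R) f df -> is_derive (f x) (1:R) g dg -> is_derive x (1:R) (fun t => g (f t)) (dg * df).
Proof.
move=> [hf vf] [hg vg]; split.
  apply/derivable1_diffP; apply: differentiable_comp; exact/derivable1_diffP.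
by rewrite -derive1E (derive1_comp hf hg) !derive1E vf vg.
Qed.

Lemma isdD (R : realType) (f g : R -> R) (x a b : R) :
  is_derive x (1:R) f a -> is_derive x (1:R) g b -> is_derive x (1:R) (fun t => f t + g t) (a + b).
Proof. move=> ha hb; exact: (@is_deriveD _ _ _ f g x 1 a b). Qed.

Lemma isdMid0 (R : realType) (g : R -> R) (b : R) :
  is_derive (0:R) (1:R) g b -> is_derive (0:R) (1:R) (fun t => t * g t) (g 0).
Proof.
move=> hb; have h := is_deriveM (is_derive_id (0:R) (1:R)) hb.
have e : (0 : R) *: b + g 0 *: (1:R) = g 0 by rewrite scale0r add0r [_ *: 1]mulr1.
rewrite -e. exact h.
Qed.

Lemma PpE (R : realType) (j : 'I_5) (t x : R) :
  (Pp (t *: delta_mx 0 j)).[x] = (P0 R).[x] + t * x ^+ j.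
Proof.
rewrite /Pp hornerD horner_sum (bigD1 j) //= big1 ?addr0.
  by rewrite !mxE !eqxx mulr1 hornerZ hornerXn.
move=> k nkj; rewrite !mxE eqxx /= (negbTE nkj) mulr0.
by rewrite scale0r horner0.
Qed.

Lemma P0E (R : realType) (x : R) :
  (P0 R).[x] = 32%:R * (x^+2)^+3 - 48%:R * (x^+2)^+2 + 18%:R * x^+2 - 1.
Proof. rewrite /P0 !hornerE; ring. Qed.

Lemma dP0E (R : realType) (x : R) :
  ((P0 R)^`()).[x] = x * (192%:R * (x^+2)^+2 - 192%:R * x^+2 + 36%:R).
Proof.
rewrite /P0 -polyC1 !(derivB, derivD, derivN, derivZ, derivXn, derivC) !(hornerD, hornerN, hornerZ, hornerMn, hornerXn, hornerC, horner0) /=; ring.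
Qed.

Lemma detMc (R : realType) (s : R) :
  detf 5 (fun i j => (nth 0 (aL R) i)^+j + 36%:R * nth 0 (aL R) i * (nth 0 (zL R s) i)^+j + 1/35%:R)
  = s^+3 * (8%:R * 3%:R^+11 / 35%:R) * (- 11%:R + 18%:R * s^+2 - 7%:R * s^+4).
Proof.
rewrite /= /bump /=.
field; by rewrite ?pnatr_eq0.
Qed.

Lemma zeta_facts (R : realType) (i : 'I_5) :
  (P0 R).[zeta0 R i] = nth 0 (aL R) i /\ ((P0 R)^`()).[zeta0 R i] = 0.
Proof.
pose s : R := Num.sqrt 3%:R.
have s2 : s^+2 = 3%:R by apply: sqr_sqrtr; apply: ler0n.
have h1 : (- (s / 2%:R))^+2 = 3%:R / 4%:R.
  by rewrite sqrrN expr_div_n s2 -natrX.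
have h2 : (s / 2%:R)^+2 = 3%:R / 4%:R.
  by rewrite expr_div_n s2 -natrX.
have h3 : (- (1 / 2%:R))^+2 = 1 / 4%:R :> R.
  by rewrite sqrrN expr_div_n expr1n -natrX.
have h4 : (1 / 2%:R)^+2 = 1 / 4%:R :> R.
  by rewrite expr_div_n expr1n -natrX.
case: i => [[|[|[|[|[|//]]]]] Hi]; rewrite /zeta0 /= P0E dP0E ?h1 ?h2 ?h3 ?h4;
  (split; [field | field]); by rewrite ?pnatr_eq0.
Qed.

Lemma dP0a (R : realType) (i : 'I_5) :
  ((P0 R)^`()).[nth 0 (aL R) i] = 36%:R * nth 0 (aL R) i.
Proof.
rewrite dP0E; case: i => [[|[|[|[|[|//]]]]] Hi] /=; ring.
Qed.

Theorem lemma2p12 (R : realType)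
  (zeta : 'I_5 -> 'rV[R]_5 -> R) (beta : 'rV[R]_5 -> R) :
  (* continuations of the critical points zeta_{i,0} *)
  (forall i, zeta i 0 = zeta0 R i) ->
  (forall i, differentiable (zeta i) 0) ->
  (forall i, \forall p \near (0 : 'rV[R]_5), (Pp p)^`().[zeta i p] = 0) ->
  (* continuation of the fixed point beta_0 = 1 *)
  beta 0 = 1 ->
  differentiable beta 0 ->
  (\forall p \near (0 : 'rV[R]_5), (Pp p).[beta p] = beta p) ->
  \det (\matrix_(i < 5, j < 5)
          ('D_(delta_mx 0 j) (fun p => (Pp p).[(Pp p).[zeta i p]]) 0
           - 'D_(delta_mx 0 j) beta 0)) != 0.
Proof.
move=> hz0 hzd _ hb0 hbd hbn.
have hB : forall j : 'I_5, 'D_(delta_mx 0 j) beta 0 = - (1 / 35%:R).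
  move=> j; set v := delta_mx 0 j.
  rewrite dirD; set b := fun t : R => beta (t *: v).
  have Hb : is_derive (0:R) (1:R) b ('D_1 b 0).
    by apply: derivableP; apply: dirDable; exact: diff_derivable.
  have b0 : b 0 = 1 by rewrite /b scale0r.
  have hn : \forall t \near (0:R), b t = (P0 R).[b t] + t * ('X^j).[b t].
    apply: filterS (@near_scale R (fun p => (Pp p).[beta p] = beta p) v hbn) => t.
    by rewrite /b hornerXn -PpE => ->.
  have HG : is_derive (0:R) (1:R) (fun t => (P0 R).[b t] + t * ('X^j).[b t])
      (((P0 R)^`()).[b 0] * 'D_1 b 0 + ('X^j).[b 0]).
    have H1 := @isd_comp R _ _ _ _ _ Hb (is_derive_poly (P0 R) (b 0)).
    have H2 := @isdMid0 R _ _ (@isd_comp R _ _ _ _ _ Hb (is_derive_poly 'X^j (b 0))).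
    exact (@isdD R _ _ _ _ _ H1 H2).
  have e := @near_eq_derive _ _ _ _ _ (0:R) (1:R) hn.
  have e2 : 'D_1 b 0 = ((P0 R)^`()).[b 0] * 'D_1 b 0 + ('X^j).[b 0].
    by rewrite {1}e; case: HG.
  move: e2; rewrite b0 dP0E hornerXn !expr1n !mul1r mulr1.
  move: ('D_1 b 0) => D e2.
  lra.
have hZ : forall i j : 'I_5, 'D_(delta_mx 0 j) (fun p => (Pp p).[(Pp p).[zeta i p]]) 0
    = (nth 0 (aL R) i)^+j + 36%:R * nth 0 (aL R) i * (zeta0 R i)^+j.
  move=> i j; set v := delta_mx 0 j.
  rewrite dirD; set z := fun t : R => zeta i (t *: v).
  have Hz : is_derive (0:R) (1:R) z ('D_1 z 0).
    by apply: derivableP; apply: dirDable; exact: diff_derivable.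
  have z0 : z 0 = zeta0 R i by rewrite /z scale0r.
  pose A := fun t : R => (P0 R).[z t] + t * ('X^j).[z t].
  have -> : (fun t : R => (Pp (t *: v)).[(Pp (t *: v)).[zeta i (t *: v)]]) =
            (fun t : R => (P0 R).[A t] + t * ('X^j).[A t]).
    by apply: funext => t; rewrite /A /z !PpE !hornerXn.
  have HA : is_derive (0:R) (1:R) A
      (((P0 R)^`()).[z 0] * 'D_1 z 0 + ('X^j).[z 0]).
    have H1 := @isd_comp R _ _ _ _ _ Hz (is_derive_poly (P0 R) (z 0)).
    have H2 := @isdMid0 R _ _ (@isd_comp R _ _ _ _ _ Hz (is_derive_poly 'X^j (z 0))).
    exact (@isdD R _ _ _ _ _ H1 H2).
  have HF : is_derive (0:R) (1:R) (fun t : R => (P0 R).[A t] + t * ('X^j).[A t])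
      (((P0 R)^`()).[A 0] * (((P0 R)^`()).[z 0] * 'D_1 z 0 + ('X^j).[z 0]) + ('X^j).[A 0]).
    have H1 := @isd_comp R _ _ _ _ _ HA (is_derive_poly (P0 R) (A 0)).
    have H2 := @isdMid0 R _ _ (@isd_comp R _ _ _ _ _ HA (is_derive_poly 'X^j (A 0))).
    exact (@isdD R _ _ _ _ _ H1 H2).
  case: HF => _ ->.
  have A0 : A 0 = nth 0 (aL R) i.
    by rewrite /A mul0r addr0 z0; case: (zeta_facts R i).
  rewrite A0 dP0a z0 !hornerXn; case: (zeta_facts R i) => _ ->.
  by rewrite mul0r add0r addrC.
have s2 : (Num.sqrt (3%:R : R))^+2 = 3%:R by apply: sqr_sqrtr; apply: ler0n.
pose F := (fun i j : nat => (nth 0 (aL R) i)^+j + 36%:R * nth 0 (aL R) i *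
         (nth 0 (zL R (Num.sqrt 3%:R)) i)^+j + 1/35%:R).
have -> : (\matrix_(i < 5, j < 5)
          ('D_(delta_mx 0 j) (fun p => (Pp p).[(Pp p).[zeta i p]]) 0
           - 'D_(delta_mx 0 j) beta 0)) =
   \matrix_(i < 5, j < 5) F i j.
  by apply/matrixP => i j; rewrite !mxE hZ hB opprK.
rewrite detfE /F detMc.
set s := Num.sqrt _.
have s0 : s != 0 by rewrite gt_eqF // sqrtr_gt0 ltr0n.
have s4 : s^+4 = 9%:R by rewrite (_ : 4%N = (2 * 2)%N) // exprM s2 -natrX.
rewrite s2 s4 !mulf_neq0 ?expf_neq0 //.

Qed.
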